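(* Let $I$ be an open interval and let $a_1,a_2,a_3\in I$ satisfy $\sin\big(\frac{a_1-a_3}{2}\big)\sin\big(\frac{a_2-a_1}{2}\big)\sin\big(\frac{a_3-a_2}{2}\big)\neq0$. Then for all $f\in\mathscr{C}^3(I)$ and $x\in I$, \[ \begin{aligned} f(x)&=\bigg(f(a_1)+\int_{a_1}^x(f'''+f')(t)\big(1-\cos(a_1-t)\big)dt\bigg)\frac{\cos\big(x-\frac{a_2+a_3}{2}\big)-\cos\big(\frac{a_2-a_3}{2}\big)}{\cos\big(a_1-\frac{a_2+a_3}{2}\big)-\cos\big(\frac{a_2-a_3}{2}\big)}\\ &\quad+\bigg(f(a_2)+\int_{a_2}^x(f'''+f')(t)\big(1-\cos(a_2-t)\big)dt\bigg)\frac{\cos\big(x-\frac{a_1+a_3}{2}\big)-\cos\big(\frac{a_1-a_3}{2}\big)}{\cos\big(a_2-\frac{a_1+a_3}{2}\big)-\cos\big(\frac{a_1-a_3}{2}\big)}\\ &\quad+\bigg(f(a_3)+\int_{a_3}^x(f'''+f')(t)\big(1-\cos(a_3-t)\big)dt\bigg)\frac{\cos\big(x-\frac{a_1+a_2}{2}\big)-\cos\big(\frac{a_1-a_2}{2}\big)}{\cos\big(a_3-\frac{a_1+a_2}{2}\big)-\cos\big(\frac{a_1-a_2}{2}\big)}. \end{aligned} \]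
   Context: $\mathscr{C}^3(I)$ denotes the space of three times continuously differentiable complex-valued functions on $I$. *)

(* Defs.v *)
From Stdlib Require Import Reals.
From Coquelicot Require Import Coquelicot.

Definition in_I (lo hi : Rbar) (x : R) : Prop := Rbar_lt lo x /\ Rbar_lt x hi.

Definition Cderiv_at (f : R -> C) (x : R) (l : C) : Prop :=
  @is_derive R_AbsRing C_R_NormedModule f x l.

Definition CRInt (g : R -> C) (a b : R) : C :=
  @RInt C_R_CompleteNormedModule g a b.

Definition C3_with (lo hi : Rbar) (f f1 f2 f3 : R -> C) : Prop :=
  forall x, in_I lo hi x ->
    Cderiv_at f x (f1 x) /\ Cderiv_at f1 x (f2 x) /\ Cderiv_at f2 x (f3 x) /\
    continuous f3 x.

(* Main.v *)
Require Import Defs.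
From Stdlib Require Import Reals.
From Coquelicot Require Import Coquelicot.
From Stdlib Require Import Lra.

Lemma alg (sX cX s1 c1 s2 c2 s3 c3 : R) :
  s1*c2-c1*s2 <> 0 -> s1*c3-c1*s3 <> 0 -> s2*c3-c2*s3 <> 0 ->
  let l1 := (sX*c2 - cX*s2)*(sX*c3 - cX*s3)/((s1*c2 - c1*s2)*(s1*c3 - c1*s3)) in
  let l2 := (sX*c1 - cX*s1)*(sX*c3 - cX*s3)/((s2*c1 - c2*s1)*(s2*c3 - c2*s3)) in
  let l3 := (sX*c1 - cX*s1)*(sX*c2 - cX*s2)/((s3*c1 - c3*s1)*(s3*c2 - c3*s2)) in
  l1*(s1^2+c1^2) + l2*(s2^2+c2^2) + l3*(s3^2+c3^2) = sX^2+cX^2 /\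
  l1*((s1*cX-c1*sX)*(c1*cX+s1*sX)) + l2*((s2*cX-c2*sX)*(c2*cX+s2*sX)) + l3*((s3*cX-c3*sX)*(c3*cX+s3*sX)) = 0 /\
  l1*((s1*cX-c1*sX)^2) + l2*((s2*cX-c2*sX)^2) + l3*((s3*cX-c3*sX)^2) = 0.
Proof.
  intros H12 H13 H23 l1 l2 l3; unfold l1, l2, l3.
  assert (s2*c1 - c2*s1 <> 0) by (intro; apply H12; lra).
  assert (s3*c1 - c3*s1 <> 0) by (intro; apply H13; lra).
  assert (s3*c2 - c3*s2 <> 0) by (intro; apply H23; lra).
  split; [|split]; field; repeat split; auto.
Qed.

Lemma numer y b c : cos (y - (b+c)/2) - cos ((b-c)/2) = -2 * sin ((y-b)/2) * sin ((y-c)/2).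
Proof.
  rewrite form2.
  replace ((y - (b + c) / 2 - (b - c) / 2) / 2) with ((y-b)/2) by field.
  replace ((y - (b + c) / 2 + (b - c) / 2) / 2) with ((y-c)/2) by field.
  reflexivity.
Qed.

Lemma hs u v : sin ((u-v)/2) = sin (u/2) * cos (v/2) - cos (u/2) * sin (v/2).
Proof. replace ((u-v)/2) with (u/2 - v/2) by field. apply sin_minus. Qed.

Lemma hc u v : cos ((u-v)/2) = cos (u/2) * cos (v/2) + sin (u/2) * sin (v/2).
Proof. replace ((u-v)/2) with (u/2 - v/2) by field. apply cos_minus. Qed.

Lemma hsin2 u : sin u = 2 * sin (u/2) * cos (u/2).
Proof. rewrite <- sin_2a. f_equal. field. Qed.

Lemma hcos2 u : 1 - cos u = 2 * (sin (u/2))^2.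
Proof. replace u with (2 * (u/2)) at 1 by field. rewrite cos_2a_sin. ring. Qed.

Lemma real_part (a1 a2 a3 x : R) :
  sin ((a1 - a3) / 2) * sin ((a2 - a1) / 2) * sin ((a3 - a2) / 2) <> 0 ->
  let l1 := (cos (x - (a2 + a3) / 2) - cos ((a2 - a3) / 2))
             / (cos (a1 - (a2 + a3) / 2) - cos ((a2 - a3) / 2)) in
  let l2 := (cos (x - (a1 + a3) / 2) - cos ((a1 - a3) / 2))
             / (cos (a2 - (a1 + a3) / 2) - cos ((a1 - a3) / 2)) in
  let l3 := (cos (x - (a1 + a2) / 2) - cos ((a1 - a2) / 2))
             / (cos (a3 - (a1 + a2) / 2) - cos ((a1 - a2) / 2)) in
  l1 + l2 + l3 = 1 /\
  l1 * sin (a1 - x) + l2 * sin (a2 - x) + l3 * sin (a3 - x) = 0 /\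
  l1 * (1 - cos (a1 - x)) + l2 * (1 - cos (a2 - x)) + l3 * (1 - cos (a3 - x)) = 0.
Proof.
  intros H l1 l2 l3. unfold l1, l2, l3.
  rewrite !numer, !hcos2, !(hsin2 (_ - x)).
  rewrite !hs, !hc.
  rewrite !hs in H.
  pose proof (sin2_cos2 (x/2)) as P0.
  pose proof (sin2_cos2 (a1/2)) as P1.
  pose proof (sin2_cos2 (a2/2)) as P2.
  pose proof (sin2_cos2 (a3/2)) as P3.
  unfold Rsqr in P0, P1, P2, P3.
  set (sX := sin (x/2)) in *. set (cX := cos (x/2)) in *.
  set (s1 := sin (a1/2)) in *. set (c1 := cos (a1/2)) in *.
  set (s2 := sin (a2/2)) in *. set (c2 := cos (a2/2)) in *.
  set (s3 := sin (a3/2)) in *. set (c3 := cos (a3/2)) in *.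
  assert (H12 : s1*c2-c1*s2 <> 0) by (intro E; apply H; replace (s2*c1 - c2*s1) with (-(s1*c2-c1*s2)) by ring; rewrite E; ring).
  assert (H13 : s1*c3-c1*s3 <> 0) by (intro E; apply H; rewrite E; ring).
  assert (H23 : s2*c3-c2*s3 <> 0) by (intro E; apply H; replace (s3*c2 - c3*s2) with (-(s2*c3-c2*s3)) by ring; rewrite E; ring).
  destruct (alg sX cX s1 c1 s2 c2 s3 c3 H12 H13 H23) as [E1 [E2 E3]].
  assert (s2*c1 - c2*s1 <> 0) by (intro; apply H12; lra).
  assert (s3*c1 - c3*s1 <> 0) by (intro; apply H13; lra).
  assert (s3*c2 - c3*s2 <> 0) by (intro; apply H23; lra).
  split; [|split].
  - replace (s1^2 + c1^2) with 1 in E1 by (simpl; lra).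
    replace (s2^2 + c2^2) with 1 in E1 by (simpl; lra).
    replace (s3^2 + c3^2) with 1 in E1 by (simpl; lra).
    replace (sX^2 + cX^2) with 1 in E1 by (simpl; lra).
    rewrite <- E1. field. repeat split; auto.
  - rewrite <- E2. field. repeat split; auto.
  - rewrite <- E3. field. repeat split; auto.
Qed.

Lemma seg lo hi a x t : in_I lo hi a -> in_I lo hi x -> Rmin a x <= t <= Rmax a x -> in_I lo hi t.
Proof.
  intros [Ha1 Ha2] [Hx1 Hx2] [Ht1 Ht2]. split.
  - apply Rbar_lt_le_trans with (Rmin a x); [|exact Ht1].
    apply Rmin_case; assumption.
  - apply Rbar_le_lt_trans with (Rmax a x); [exact Ht2|].
    apply Rmax_case; assumption.
Qed.

Lemma deriv_scal (g : R -> R) (h : R -> C) t dg dh :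
  is_derive g t dg -> @is_derive R_AbsRing C_R_NormedModule h t dh ->
  @is_derive R_AbsRing C_R_NormedModule (fun u => scal (g u) (h u)) t
    (plus (scal dg (h t)) (scal (g t) dh)).
Proof.
  intros Hg Hh. unfold is_derive in *.
  eapply filterdiff_ext_lin.
  - apply (filterdiff_scal_fct t g h). intros; apply Rmult_comm.
    exact Hg. exact Hh.
  - intros y. simpl. rewrite scal_distr_l.
    change (scal y dg) with (mult y dg). rewrite <- scal_assoc. f_equal.
    rewrite scal_assoc. rewrite scal_assoc. f_equal. apply Rmult_comm.
Qed.

Lemma scalC (r : R) (z : C) : scal r z = (RtoC r * z)%C.
Proof. apply scal_R_Cmult. Qed.

Lemma key lo hi (f f1 f2 f3 : R -> C) a x : C3_with lo hi f f1 f2 f3 ->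
  in_I lo hi a -> in_I lo hi x ->
  (f a + CRInt (fun t => (f3 t + f1 t) * RtoC (1 - cos (a - t))) a x)%C =
  (f x + f1 x * RtoC (sin (a - x)) + f2 x * RtoC (1 - cos (a - x)))%C.
Proof.
  intros hf ha hx.
  set (G := fun t => plus (plus (f t) (scal (sin (a - t)) (f1 t))) (scal (1 - cos (a - t)) (f2 t))).
  assert (HI : CRInt (fun t => (f3 t + f1 t) * RtoC (1 - cos (a - t)))%C a x = minus (G x) (G a)).
  { unfold CRInt. apply (@is_RInt_unique C_R_CompleteNormedModule). apply (@is_RInt_derive C_R_CompleteNormedModule).
    - intros t Ht. destruct (hf t (seg lo hi a x t ha hx Ht)) as [D0 [D1 [D2 C3]]].
      unfold Cderiv_at in *.
      assert (HD : @is_derive R_AbsRing C_R_NormedModule G t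
        (plus (plus (f1 t) (plus (scal (- cos (a - t)) (f1 t)) (scal (sin (a - t)) (f2 t))))
              (plus (scal (- sin (a - t)) (f2 t)) (scal (1 - cos (a - t)) (f3 t))))).
      { unfold G. apply (@is_derive_plus R_AbsRing C_R_NormedModule); [apply (@is_derive_plus R_AbsRing C_R_NormedModule)|].
        - exact D0.
        - apply (deriv_scal (fun u => sin (a - u)) f1); [|exact D1]. auto_derive; [exact I| unfold Rminus; ring].
        - apply (deriv_scal (fun u => 1 - cos (a - u)) f2); [|exact D2]. auto_derive; [exact I| unfold Rminus; ring]. }
      match type of HD with is_derive _ _ ?l =>
        assert (E : l = ((f3 t + f1 t) * RtoC (1 - cos (a - t)))%C) end.
      { rewrite !scalC. apply injective_projections; simpl; unfold plus; simpl; ring. }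
      rewrite <- E. exact HD.
    - intros t Ht. destruct (hf t (seg lo hi a x t ha hx Ht)) as [D0 [D1 [D2 C3]]].
      apply (continuous_ext (fun u => @scal R_AbsRing C_R_NormedModule (1 - cos (a-u)) (@plus C_R_NormedModule (f3 u) (f1 u)))).
      + intros u. rewrite scalC. apply injective_projections; simpl; unfold plus; simpl; ring.
      + apply (@continuous_scal _ R_AbsRing C_R_NormedModule).
        * apply (ex_derive_continuous (fun u => 1 - cos (a - u))). auto_derive. exact I.
        * apply (@continuous_plus _ R_AbsRing C_R_NormedModule); [exact C3|].
          apply ex_derive_continuous. exists (f2 t). exact D1. }
  rewrite HI. unfold G.
  replace (a - a) with 0 by ring. rewrite sin_0, cos_0.
  rewrite !scalC. apply injective_projections; simpl; unfold minus, plus, opp; simpl; ring.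
Qed.

Theorem mainTheorem12 (lo hi : Rbar) (a1 a2 a3 : R)
  (h1 : in_I lo hi a1) (h2 : in_I lo hi a2) (h3 : in_I lo hi a3)
  (hsin : (sin ((a1 - a3) / 2) * sin ((a2 - a1) / 2) * sin ((a3 - a2) / 2) <> 0)%R)
  (f f1 f2 f3 : R -> C) (hf : C3_with lo hi f f1 f2 f3)
  (x : R) (hx : in_I lo hi x) :
  f x =
  ((f a1 + CRInt (fun t => (f3 t + f1 t) * RtoC (1 - cos (a1 - t))) a1 x)
     * RtoC ((cos (x - (a2 + a3) / 2) - cos ((a2 - a3) / 2))
             / (cos (a1 - (a2 + a3) / 2) - cos ((a2 - a3) / 2)))
 + (f a2 + CRInt (fun t => (f3 t + f1 t) * RtoC (1 - cos (a2 - t))) a2 x)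
     * RtoC ((cos (x - (a1 + a3) / 2) - cos ((a1 - a3) / 2))
             / (cos (a2 - (a1 + a3) / 2) - cos ((a1 - a3) / 2)))
 + (f a3 + CRInt (fun t => (f3 t + f1 t) * RtoC (1 - cos (a3 - t))) a3 x)
     * RtoC ((cos (x - (a1 + a2) / 2) - cos ((a1 - a2) / 2))
             / (cos (a3 - (a1 + a2) / 2) - cos ((a1 - a2) / 2))))%C.
Proof.
  rewrite (key lo hi f f1 f2 f3 a1 x hf h1 hx), (key lo hi f f1 f2 f3 a2 x hf h2 hx),
    (key lo hi f f1 f2 f3 a3 x hf h3 hx).
  pose proof (real_part a1 a2 a3 x hsin) as RP. cbv zeta in RP.
  destruct RP as [E1 [E2 E3]].
  set (L1 := (cos (x - (a2 + a3) / 2) - cos ((a2 - a3) / 2))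
             / (cos (a1 - (a2 + a3) / 2) - cos ((a2 - a3) / 2))) in *.
  set (L2 := (cos (x - (a1 + a3) / 2) - cos ((a1 - a3) / 2))
             / (cos (a2 - (a1 + a3) / 2) - cos ((a1 - a3) / 2))) in *.
  set (L3 := (cos (x - (a1 + a2) / 2) - cos ((a1 - a2) / 2))
             / (cos (a3 - (a1 + a2) / 2) - cos ((a1 - a2) / 2))) in *.
  transitivity (f x * RtoC (L1+L2+L3)
     + f1 x * RtoC (L1 * sin (a1 - x) + L2 * sin (a2 - x) + L3 * sin (a3 - x))
     + f2 x * RtoC (L1 * (1 - cos (a1 - x)) + L2 * (1 - cos (a2 - x)) + L3 * (1 - cos (a3 - x))))%C.
  - rewrite E1, E2, E3. apply injective_projections; simpl; ring.
  - apply injective_projections; simpl; ring.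
Qed.
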